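(* Let $Y$ be a complete geodesic CAT(0) space. For every finite weighted graph $(C,m)$, $\lambda^{Gro}(C,Y)\le\lambda(C,Y)$, with equality when $Y$ is Euclidean.
   Context: For a finite graph $C$ a weight is a positive function $m$ on edges, vertices and $\emptyset$ with $m(c)=\sum_{e\ni c}m(e)$ and $m(\emptyset)=\sum_c m(c)$. For $g:C^0\to Y$: $E(g)=\sum_{\text{edges }e}m(e)d(g(\mathrm{ori}\,e),g(\mathrm{ext}\,e))^2$; $\mathrm{bar}(g)$ is the unique minimizer of $y\mapsto\sum_c m(c)d(g(c),y)^2$; $RQ(g)=E(g)/\sum_c m(c)d(g(c),\mathrm{bar}(g))^2$ and $\lambda(C,Y)=\inf RQ(g)$ over non-constant $g$. Gromov's version: $F(g)=\frac{1}{2m(\emptyset)}\sum_{c,c'}m(c)m(c')d(g(c),g(c'))^2$ (sum over ordered pairs of vertices), $RQ^{Gro}(g)=E(g)/F(g)$, and $\lambda^{Gro}(C,Y)=\inf RQ^{Gro}(g)$ over non-constant $g$. *)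

(* Defs.v *)
From HB Require Import structures.
From mathcomp Require Import all_boot all_order all_algebra.
From mathcomp Require Import all_classical all_reals ereal.
From Stdlib Require Import ClassicalEpsilon.
Set Implicit Arguments. Unset Strict Implicit. Unset Printing Implicit Defensive.
Import Order.TTheory GRing.Theory Num.Theory.
Local Open Scope ring_scope.

Section MetricDefs.
Variables (R : realType) (Y : Type) (d : Y -> Y -> R).

Definition is_metric : Prop :=
  (forall x y, 0 <= d x y) /\ (forall x y, d x y = 0 <-> x = y) /\
  (forall x y, d x y = d y x) /\ (forall x y z, d x z <= d x y + d y z).

Definition is_complete : Prop :=
  forall u : nat -> Y,
    (forall e : R, 0 < e -> exists N, forall m n, (N <= m)%N -> (N <= n)%N -> d (u m) (u n) < e) ->
    exists l, forall e : R, 0 < e -> exists N, forall n, (N <= n)%N -> d (u n) l < e.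

Definition is_geodesic (g : R -> Y) (x y : Y) : Prop :=
  g 0 = x /\ g 1 = y /\
  forall s t, 0 <= s <= 1 -> 0 <= t <= 1 -> d (g s) (g t) = `|s - t| * d x y.

Definition is_geodesic_space : Prop := forall x y, exists g, is_geodesic g x y.

(* CAT(0) comparison inequality: distance from a vertex z of a geodesic
   triangle to the point g t of the opposite side [x,y] is at most the
   distance in the Euclidean comparison triangle (computed by Stewart's formula) *)
Definition CAT0_ineq : Prop :=
  forall (g : R -> Y) x y z t, is_geodesic g x y -> 0 <= t <= 1 ->
    d z (g t) ^+ 2 <= (1 - t) * d z x ^+ 2 + t * d z y ^+ 2 - t * (1 - t) * d x y ^+ 2.

Definition complete_geodesic_CAT0 : Prop :=
  [/\ is_metric, is_complete, is_geodesic_space & CAT0_ineq].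
End MetricDefs.

Section GraphDefs.
Variables (R : realType) (V E : finType) (ori ext : E -> V) (mE : E -> R).

Definition mV (c : V) : R := \sum_(e : E | (ori e == c) || (ext e == c)) mE e.
Definition m0 : R := \sum_(c : V) mV c.

Definition weight_ok : Prop := (forall e, 0 < mE e) /\ (forall c, 0 < mV c).

Variables (Y : Type) (d : Y -> Y -> R).

Definition energy (g : V -> Y) : R :=
  \sum_(e : E) mE e * d (g (ori e)) (g (ext e)) ^+ 2.

Definition bar_fun (g : V -> Y) (y : Y) : R := \sum_(c : V) mV c * d (g c) y ^+ 2.

Definition is_barycenter (g : V -> Y) (y : Y) : Prop :=
  forall z, bar_fun g y <= bar_fun g z.

Definition bar (g : V -> Y) : option Y :=
  match [pick c : V] with
  | Some c => Some (epsilon (inhabits (g c)) (is_barycenter g))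
  | None => None
  end.

Definition RQ (g : V -> Y) : R :=
  energy g / (match bar g with Some b => bar_fun g b | None => 0 end).

Definition Fgro (g : V -> Y) : R :=
  (2 * m0)^-1 * \sum_(c : V) \sum_(c' : V) mV c * mV c' * d (g c) (g c') ^+ 2.

Definition RQgro (g : V -> Y) : R := energy g / Fgro g.

Definition nonconstant (g : V -> Y) : Prop := exists c c', g c <> g c'.

Definition lambda : \bar R := ereal_inf [set (RQ g)%:E | g in nonconstant].
Definition lambda_gro : \bar R := ereal_inf [set (RQgro g)%:E | g in nonconstant].
End GraphDefs.

Definition euclid_dist (R : realType) (n : nat) (x y : 'rV[R]_n) : R :=
  Num.sqrt (\sum_(i < n) (x ord0 i - y ord0 i) ^+ 2).

(* Main.v *)
Require Import Defs.
From HB Require Import structures.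
From mathcomp Require Import all_boot all_order all_algebra.
From mathcomp Require Import all_classical all_reals ereal.
From mathcomp Require Import lra ring.
From Stdlib Require Import ClassicalEpsilon.
Import Order.TTheory GRing.Theory Num.Theory.
Local Open Scope ring_scope.

Section Gen.
Variables (R : realType) (V E : finType) (ori ext : E -> V) (mE : E -> R).
Hypothesis Hw : weight_ok ori ext mE.
Variables (Y : Type) (d : Y -> Y -> R).
Hypothesis Hmet : is_metric d.
Variable g : V -> Y.

Local Notation f := (bar_fun ori ext mE d g).
Local Notation M := (m0 ori ext mE).
Local Notation mv := (mV ori ext mE).

Lemma mv_gt0 c : 0 < mv c. Proof. by case: Hw. Qed.

Lemma d_ge0 x y : 0 <= d x y. Proof. by case: Hmet. Qed.

Lemma f_ge0 z : 0 <= f z.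
Proof. rewrite /bar_fun; apply: sumr_ge0 => c _; apply: mulr_ge0; [exact/ltW/mv_gt0|exact: sqr_ge0]. Qed.

Lemma M_gt0 (c0 : V) : 0 < M.
Proof.
rewrite /m0 (bigD1 c0) //=; apply: ltr_wpDr; last exact: mv_gt0.
by apply: sumr_ge0 => c _; exact/ltW/mv_gt0.
Qed.

Lemma f_conv (Hcat : CAT0_ineq d) (gm : R -> Y) x y t :
  is_geodesic d gm x y -> 0 <= t <= 1 ->
  f (gm t) <= (1 - t) * f x + t * f y - t * (1 - t) * d x y ^+ 2 * M.
Proof.
move=> Hg Ht; rewrite /bar_fun /m0 !mulr_sumr -big_split -sumrB /=.
apply: ler_sum => c _.
have := Hcat gm x y (g c) t Hg Ht; have := mv_gt0 c => hm h.
rewrite (_ : _ - _ = mv c * ((1 - t) * d (g c) x ^+ 2 + t * d (g c) y ^+ 2 -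
    t * (1 - t) * d x y ^+ 2)); last by ring.
by rewrite ler_wpM2l // ltW.
Qed.

Lemma f_cont y l :
  d y l <= 1 -> f l <= (1 + d y l) * f y + (d y l + d y l ^+ 2) * M.
Proof.
move=> h1; rewrite /bar_fun /m0 !mulr_sumr -big_split /=.
apply: ler_sum => c _.
have := mv_gt0 c => hm.
have ht : d (g c) l <= d (g c) y + d y l by case: Hmet => _ [_ [_ ]]; apply.
have h0 := d_ge0 (g c) l; have h0' := d_ge0 (g c) y; have h0'' := d_ge0 y l.
have hs : d (g c) l ^+ 2 <= (1 + d y l) * d (g c) y ^+ 2 + (d y l + d y l ^+ 2).
  have : d (g c) l ^+ 2 <= (d (g c) y + d y l) ^+ 2 by rewrite lerXn2r // nnegrE addr_ge0.
  have : 0 <= d y l * (d (g c) y - 1) ^+ 2 by rewrite mulr_ge0 // sqr_ge0.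
  nra.
rewrite [X in _ <= X](_ : _ = mv c * ((1 + d y l) * d (g c) y ^+ 2 + (d y l + d y l ^+ 2))); last by ring.
by rewrite ler_wpM2l // ltW.
Qed.


Lemma variance (Hgeo : is_geodesic_space d) (Hcat : CAT0_ineq d) (c0 : V) b :
  (forall z, f b <= f z) -> forall y, f b + M * d b y ^+ 2 <= f y.
Proof.
move=> hb y; have hM := M_gt0 c0.
have [gm Hg] := Hgeo b y.
rewrite leNgt; apply/negP => hlt.
have hby := hb y.
have hX : 0 < M * d b y ^+ 2 by nra.
pose t := (f b + M * d b y ^+ 2 - f y) / (2 * (M * d b y ^+ 2)).
have ht0 : 0 < t by rewrite /t divr_gt0 //; lra.
have htX : t * (M * d b y ^+ 2) = (f b + M * d b y ^+ 2 - f y) / 2.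
  rewrite /t invfM -!mulrA; congr (_ * _); by rewrite mulVf ?gt_eqF // mulr1.
have ht1 : t <= 1.
  have : 2 * t * (M * d b y ^+ 2) <= 2 * (M * d b y ^+ 2).
    by rewrite -mulrA htX; lra.
  by nra.
have ht : 0 <= t <= 1 by rewrite ht1 ltW.
have := f_conv Hcat _ _ _ _ Hg ht; have := hb (gm t) => h1 h2.
have h3 : t * (t * (M * d b y ^+ 2)) = t * ((f b + M * d b y ^+ 2 - f y) / 2) by rewrite htX.
nra.
Qed.

Lemma inv_mono (m n : nat) : (m <= n)%N -> n.+1%:R^-1 <= m.+1%:R^-1 :> R.
Proof. by move=> h; rewrite lef_pV2 ?posrE ?ltr0n // ler_nat ltnS. Qed.

Lemma exists_min (Hc : is_complete d) (Hgeo : is_geodesic_space d)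
  (Hcat : CAT0_ineq d) (c0 : V) : exists b, forall z, f b <= f z.
Proof.
have hM := M_gt0 c0.
pose S := [set f y | y in [set: Y]]%classic.
have hS0 : (S !=set0)%classic by exists (f (g c0)); exists (g c0).
have hSl : has_lbound S by exists 0 => _ [y _ <-]; exact: f_ge0.
pose i := inf S.
have hi : forall y, i <= f y by move=> y; apply: ge_inf => //; exists y.
have hi0 : 0 <= i by apply: lb_le_inf => // _ [y _ <-]; exact: f_ge0.
have happ : forall n : nat, exists y, f y < i + n.+1%:R^-1.
  move=> n; have [_ [y _ <-] hy] := @inf_adherent R S n.+1%:R^-1 (ltac:(by rewrite invr_gt0 ltr0n)) (conj hS0 hSl).
  by exists y.
have [u hu] := @boolp.choice _ _ (fun n y => f y < i + n.+1%:R^-1) happ.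
have key : forall N m n, (N <= m)%N -> (N <= n)%N ->
    M * d (u m) (u n) ^+ 2 < 4 * N.+1%:R^-1.
  move=> N m n hm hn.
  have [gm Hg] := Hgeo (u m) (u n).
  have ht : 0 <= (2^-1 : R) <= 1 by apply/andP; split; lra.
  have := f_conv Hcat _ _ _ _ Hg ht; have := hi (gm 2^-1).
  have := hu m; have := hu n; have := inv_mono _ _ hm; have := inv_mono _ _ hn.
  move=> a1 a2 a3 a4 a5 a6; move: a1 a2 a3 a4 a5 a6.
  move: (n.+1%:R^-1) (m.+1%:R^-1) (N.+1%:R^-1) (f (gm 2^-1)) => ??? ?; lra.
have cauchy : forall e : R, 0 < e -> exists N, forall m n, (N <= m)%N -> (N <= n)%N ->
    d (u m) (u n) < e.
  move=> e he.
  have [k hk] := @ltr_add_invr R 0 (M * e ^+ 2 / 4) (ltac:(by rewrite divr_gt0 // mulr_gt0 // exprn_gt0)).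
  exists k => m n hm hn; have := key k m n hm hn; have := d_ge0 (u m) (u n).
  rewrite add0r in hk; move=> h0 h1.
  rewrite ltNge; apply/negP => h2.
  have : e ^+ 2 <= d (u m) (u n) ^+ 2 by rewrite lerXn2r // nnegrE ltW.
  move=> h3; have h4 : M * e ^+ 2 <= M * d (u m) (u n) ^+ 2 by rewrite ler_wpM2l // ltW.
  move: hk h1 h4; move: (k.+1%:R^-1) => ???; lra.
have [l hl] := Hc u cauchy.
exists l => z; apply: le_trans (hi z).
apply/ler_addgt0Pr => eps heps.
pose K := i + 1 + 2 * M.
have hK : 0 < K by rewrite /K; lra.
have [N1 hN1] := hl 1 ltr01.
have [N2 hN2] := hl (eps / (2 * K)) (ltac:(by rewrite divr_gt0 // mulr_gt0)).
have [k hk] := @ltr_add_invr R 0 (eps / 2) (ltac:(by rewrite divr_gt0)).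
rewrite add0r in hk.
pose n := maxn N1 (maxn N2 k).
have hn1 : (N1 <= n)%N by rewrite /n leq_maxl.
have hn2 : (N2 <= n)%N by rewrite /n (leq_trans _ (leq_maxr _ _)) // leq_maxl.
have hnk : (k <= n)%N by rewrite /n (leq_trans _ (leq_maxr _ _)) // leq_maxr.
have h1 := hN1 n hn1; have h2 := hN2 n hn2.
have hdel := d_ge0 (u n) l.
have hc := f_cont _ _ (ltW h1).
have hun := hu n; have han := inv_mono _ _ hnk; have ha0 := inv_mono _ _ (leq0n n).
have hpos : 0 < n.+1%:R^-1 :> R by rewrite invr_gt0 ltr0n.
have hdK : d (u n) l * (2 * K) < eps by rewrite -ltr_pdivlMr // mulr_gt0.
have hfun : d (u n) l * f (u n) <= d (u n) l * (i + 1).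
  rewrite ler_wpM2l //; rewrite invr1 in ha0.
  by move: hun ha0; move: (n.+1%:R^-1) => ???; lra.
have hdd : d (u n) l ^+ 2 * M <= d (u n) l * M.
  by rewrite expr2 -mulrA ler_wpM2l // ler_piMl // ltW.
rewrite ?invr1 in ha0.
move: hc hun han ha0 hpos hdK hfun hdd hk; rewrite /K.
move: (n.+1%:R^-1) (k.+1%:R^-1) (d (u n) l) => ???; move=> *; nra.
Qed.

Lemma d_sym x y : d x y = d y x. Proof. by case: Hmet => _ [_ [+ _]]; apply. Qed.

Lemma d_eq0 x y : d x y = 0 -> x = y. Proof. by case: Hmet => _ [+ _] => h /h. Qed.

Lemma energy_ge0 : 0 <= energy ori ext mE d g.
Proof.
rewrite /energy; apply: sumr_ge0 => e _; apply: mulr_ge0; last exact: sqr_ge0.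
by case: Hw => h _; exact/ltW/h.
Qed.

Lemma RQ_cmp (Hc : is_complete d) (Hgeo : is_geodesic_space d) (Hcat : CAT0_ineq d) :
  nonconstant g -> RQgro ori ext mE d g <= RQ ori ext mE d g.
Proof.
move=> [c0 [c1 hne]].
have hM := M_gt0 c0.
rewrite /RQ /bar; case: pickP => [c' _|/(_ c0) //].
set b := epsilon _ _.
have hb : forall z, f b <= f z.
  have := @epsilon_spec _ (inhabits (g c')) (is_barycenter ori ext mE d g).
  by apply; apply: exists_min.
have hvar := variance Hgeo Hcat c0 _ hb.
have hB : 0 < f b.
  rewrite lt_def f_ge0 andbT; apply/eqP => h0.
  have hz : forall c, g c = b.
    move=> c; apply: d_eq0.
    have hnn : forall c, predT c -> 0 <= mv c * d (g c) b ^+ 2.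
      by move=> c2 _; apply: mulr_ge0; [exact/ltW/mv_gt0|exact: sqr_ge0].
    have := @psumr_eq0P _ _ predT (fun c => mv c * d (g c) b ^+ 2) hnn h0 c isT.
    move=> /eqP; rewrite mulf_eq0 (gt_eqF (mv_gt0 c)) /= sqrf_eq0.
    by move/eqP.
  by apply: hne; rewrite !hz.
have hF : f b <= Fgro ori ext mE d g.
  rewrite /Fgro.
  have -> : \sum_c \sum_c2 mv c * mv c2 * d (g c) (g c2) ^+ 2 = \sum_c mv c * f (g c).
    apply: eq_bigr => c _; rewrite /bar_fun mulr_sumr; apply: eq_bigr => c2 _.
    by rewrite d_sym mulrA.
  have : \sum_c mv c * (f b + M * d b (g c) ^+ 2) <= \sum_c mv c * f (g c).
    by apply: ler_sum => c _; rewrite ler_wpM2l // ltW // mv_gt0.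
  have -> : \sum_c mv c * (f b + M * d b (g c) ^+ 2) = 2 * M * f b.
    under eq_bigr do rewrite mulrDr.
    rewrite big_split /= -mulr_suml.
    have -> : \sum_i mv i * (M * d b (g i) ^+ 2) = M * f b.
      by rewrite /bar_fun mulr_sumr; apply: eq_bigr => c _; rewrite d_sym; ring.
    rewrite /m0; ring.
  move=> h; rewrite -(ler_pM2l (_ : 0 < 2 * M)) ?mulr_gt0 // mulrA mulfV ?mul1r //.
  by rewrite gt_eqF // mulr_gt0.
rewrite /RQgro ler_wpM2l ?energy_ge0 //.
rewrite lef_pV2 ?posrE //; exact: lt_le_trans hF.
Qed.

End Gen.
Section Scal.
Variables (R : realType) (V : finType) (w a : V -> R).
Lemma phi_exp (z : R) : \sum_c w c * (a c - z) ^+ 2 =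
  \sum_c w c * a c ^+ 2 - 2 * z * \sum_c w c * a c + z ^+ 2 * \sum_c w c.
Proof.
transitivity (\sum_c (w c * a c ^+ 2 - (2 * z) * (w c * a c) + z ^+ 2 * w c)).
  by apply: eq_bigr => c _; ring.
by rewrite big_split sumrB /= -!mulr_sumr.
Qed.

Lemma double_exp : \sum_c \sum_c' w c * w c' * (a c - a c') ^+ 2 =
  2 * ((\sum_c w c * a c ^+ 2) * \sum_c w c - (\sum_c w c * a c) ^+ 2).
Proof.
transitivity (\sum_c ((\sum_c w c * a c ^+ 2) * w c - 2 * (\sum_c w c * a c) * (w c * a c)
     + (\sum_c w c) * (w c * a c ^+ 2))).
  apply: eq_bigr => c _.
  have -> : \sum_c' w c * w c' * (a c - a c') ^+ 2 = w c * \sum_c' w c' * (a c' - a c) ^+ 2.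
    by rewrite mulr_sumr; apply: eq_bigr => c' _; ring.
  rewrite phi_exp; ring.
rewrite big_split sumrB /= -!mulr_sumr; ring.
Qed.
End Scal.

Section Euc.
Variables (R : realType) (V E : finType) (ori ext : E -> V) (mE : E -> R).
Hypothesis Hw : weight_ok ori ext mE.
Variable n : nat.
Local Notation d := (@euclid_dist R n).
Variable g : V -> 'rV[R]_n.
Local Notation f := (bar_fun ori ext mE d g).
Local Notation M := (m0 ori ext mE).
Local Notation mv := (mV ori ext mE).

Lemma ed2 x y : d x y ^+ 2 = \sum_i (x ord0 i - y ord0 i) ^+ 2.
Proof. by rewrite /euclid_dist sqr_sqrtr // sumr_ge0 // => i _; exact: sqr_ge0. Qed.

Lemma f_coord z : f z = \sum_i \sum_c mv c * (g c ord0 i - z ord0 i) ^+ 2.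
Proof.
rewrite /bar_fun; under eq_bigr do rewrite ed2 mulr_sumr.
by rewrite exchange_big.
Qed.

Lemma F_coord : Fgro ori ext mE d g =
  \sum_i (2 * M)^-1 * \sum_c \sum_c' mv c * mv c' * (g c ord0 i - g c' ord0 i) ^+ 2.
Proof.
rewrite /Fgro; under eq_bigr do under eq_bigr do rewrite ed2 mulr_sumr.
under eq_bigr do rewrite exchange_big.
by rewrite exchange_big mulr_sumr.
Qed.

Lemma RQ_eq_gro : RQ ori ext mE d g = RQgro ori ext mE d g.
Proof.
rewrite /RQ /RQgro /bar; case: pickP => [c0 _|h]; last first.
  rewrite /Fgro big1 ?mulr0 // => c _; by have := h c.
have hM : 0 < M.
  rewrite /m0 (bigD1 c0) //=; apply: ltr_wpDr; last by case: Hw.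
  by apply: sumr_ge0 => c _; case: Hw => _ h; exact/ltW/h.
pose mu : 'rV[R]_n := \row_i (M^-1 * \sum_c mv c * g c ord0 i).
have hmu : forall z, f mu <= f z.
  move=> z; rewrite !f_coord; apply: ler_sum => i _.
  rewrite !phi_exp mxE.
  set Q := \sum_c _ * _ ^+ 2; set S := \sum_c _ * _.
  have -> : \sum_c mv c = M by [].
  have : 0 <= M * (z ord0 i - M^-1 * S) ^+ 2 by apply: mulr_ge0; [exact: ltW | exact: sqr_ge0].
  have -> : M * (z ord0 i - M^-1 * S) ^+ 2 = (Q - 2 * z ord0 i * S + z ord0 i ^+ 2 * M)
     - (Q - 2 * (M^-1 * S) * S + (M^-1 * S) ^+ 2 * M).
    by field; rewrite gt_eqF.
  by rewrite subr_ge0.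
set b := epsilon _ _.
have hb : forall z, f b <= f z.
  have := @epsilon_spec _ (inhabits (g c0)) (is_barycenter ori ext mE d g).
  by apply; exists mu.
have -> : f b = f mu by apply/eqP; rewrite eq_le hb hmu.
congr (_ / _).
rewrite f_coord F_coord; apply: eq_bigr => i _.
rewrite phi_exp double_exp mxE.
have -> : \sum_c mv c = M by [].
by field; rewrite gt_eqF.
Qed.
End Euc.

Theorem mainTheorem10 (R : realType) (V E : finType) (ori ext : E -> V) (mE : E -> R) :
  weight_ok ori ext mE ->
  (forall (Y : Type) (d : Y -> Y -> R), complete_geodesic_CAT0 d ->
     (lambda_gro ori ext mE d <= lambda ori ext mE d)%E) /\
  (forall n : nat,
     lambda_gro ori ext mE (@euclid_dist R n) = lambda ori ext mE (@euclid_dist R n)).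
Proof.
move=> Hw; split.
  move=> Y d [Hmet Hc Hgeo Hcat].
  apply/ereal_infP => _ [g hg <-].
  apply: (@le_trans _ _ (RQgro ori ext mE d g)%:E).
    by apply: ereal_inf_lbound; exists g.
  by rewrite lee_fin; apply: RQ_cmp.
move=> n; rewrite /lambda /lambda_gro; congr ereal_inf.
by apply/seteqP; split => _ [g hg <-]; exists g => //; rewrite RQ_eq_gro.
Qed.
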